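(* Let $K_1,\dots,K_m\subset\mathbb{R}^n$ be closed sets, all super-regular at $x^*\in K:=\bigcap_{l=1}^mK_l$, and suppose the local metric inequality holds at $x^*$: there are $\beta\ge1$ and a neighborhood $V_1$ of $x^*$ with $d(x,K)\le\beta\max_{1\le l\le m}d(x,K_l)$ for all $x\in V_1$. Let $$\rho:=\frac{\sqrt{\beta^2-(1-\tau)^2}}{\beta},\qquad L:=\frac{\beta}{1-\rho}.$$ Then for any $\tau\in(0,1)$ there is a neighborhood $U$ of $x^*$ such that for any $x_0\in U$ and any positive integer $\bar p$, the local super-regular SHQP algorithm (described in the context) with $\tau_i=\tau$ for all $i$ generates a sequence $\{x_i\}$ converging to some $\bar x\in K\cap V_1$ with $$\|x_{i+1}-\bar x\|\le\|x_i-\bar x\|\ \text{ and }\ \|x_i-\bar x\|\le L\max_{l\in\{1,\dots,m\}}d(x_i,K_l)\quad\text{for all }i\ge0.$$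
   Context: For a closed set $C\subset\mathbb{R}^n$ and $\bar x\in C$, the regular normal cone is $\hat N_C(\bar x)=\{y:\langle y,x-\bar x\rangle\le o(\|x-\bar x\|)\text{ for all }x\in C\}$ and the limiting normal cone $N_C(\bar x)$ is the set of $y$ for which there exist $x_i\to\bar x$ with $x_i\in C$ and $y_i\in\hat N_C(x_i)$ with $y_i\to y$. $C$ is super-regular at $\bar x\in C$ if for every $\delta>0$ there is a neighborhood $V$ of $\bar x$ such that $\langle z-y,v\rangle\le\delta\|z-y\|\|v\|$ for all $z,y\in C\cap V$ and $v\in N_C(y)$. $P_C(x)$ denotes the set of nearest points of $C$ to $x$. Local super-regular SHQP algorithm (parameters: a positive integer $\bar p$ and numbers $\tau_i\in[0,1)$): starting from $x_0$, for $i=1,2,\dots$: choose $\bar j_i\in\arg\max_j d(x_{i-1},K_j)$; pick $x_i^{(\bar j_i)}\in P_{K_{\bar j_i}}(x_{i-1})$; set $a_i=x_{i-1}-x_i^{(\bar j_i)}$ and $b_i=\langle a_i,(1-\tau_i)x_i^{(\bar j_i)}+\tau_ix_{i-1}\rangle$; let $\tilde F_i=\{x:\langle a_l,x\rangle\le b_l\text{ for }\max(1,i-\bar p)\le l\le i\}$ and $x_i=P_{\tilde F_i}(x_{i-1})$. *)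

(* Defs.v *)
From Stdlib Require Import Reals ClassicalEpsilon.
From mathcomp Require Import all_boot.
Set Implicit Arguments. Unset Strict Implicit.
Open Scope R_scope.

Definition vec (n : nat) := 'I_n -> R.
Definition vadd n (x y : vec n) : vec n := fun i => x i + y i.
Definition vsub n (x y : vec n) : vec n := fun i => x i - y i.
Definition vscale n (c : R) (x : vec n) : vec n := fun i => c * x i.
Definition inner n (x y : vec n) : R := \big[Rplus/0]_(i < n) (x i * y i).
Definition vnorm n (x : vec n) : R := sqrt (inner x x).
Definition vdist n (x y : vec n) : R := vnorm (vsub x y).

Definition vball n (x : vec n) (r : R) (y : vec n) : Prop := vdist y x < r.
Definition vis_neighborhood n (V : vec n -> Prop) (x : vec n) : Prop :=
  exists r, 0 < r /\ forall y, vball x r y -> V y.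
Definition vclosed_set n (C : vec n -> Prop) : Prop :=
  forall x, (forall eps, 0 < eps -> exists y, C y /\ vdist x y < eps) -> C x.

(* d(x,C) = inf_{y in C} ||x - y|| (for nonempty C) *)
Definition is_dist_to n (C : vec n -> Prop) (x : vec n) (r : R) : Prop :=
  (forall y, C y -> r <= vdist x y) /\
  (forall r', (forall y, C y -> r' <= vdist x y) -> r' <= r).
Definition dist_set n (C : vec n -> Prop) (x : vec n) : R :=
  epsilon (inhabits 0) (fun r => is_dist_to C x r).

Definition proj_set n (C : vec n -> Prop) (x p : vec n) : Prop :=
  C p /\ forall y, C y -> vdist x p <= vdist x y.

Definition seq_cv n (s : nat -> vec n) (l : vec n) : Prop :=
  forall eps, 0 < eps -> exists N, forall i, (N <= i)%nat -> vdist (s i) l < eps.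

Definition reg_normal n (C : vec n -> Prop) (xb y : vec n) : Prop :=
  C xb /\ forall eps, 0 < eps -> exists r, 0 < r /\
    forall x, C x -> vdist x xb < r -> inner y (vsub x xb) <= eps * vdist x xb.

Definition lim_normal n (C : vec n -> Prop) (xb y : vec n) : Prop :=
  exists (xs ys : nat -> vec n), (forall i, C (xs i)) /\ seq_cv xs xb /\
    (forall i, reg_normal C (xs i) (ys i)) /\ seq_cv ys y.

Definition super_regular n (C : vec n -> Prop) (xb : vec n) : Prop :=
  C xb /\ forall delta, 0 < delta -> exists V, vis_neighborhood V xb /\
    forall z y v, C z -> V z -> C y -> V y -> lim_normal C y v ->
      inner (vsub z y) v <= delta * vdist z y * vnorm v.

(* the sets are K 0, ..., K (m-1) *)
Definition inter n (K : nat -> vec n -> Prop) (m : nat) (x : vec n) : Prop :=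
  forall l, (l < m)%nat -> K l x.
Definition maxd n (K : nat -> vec n -> Prop) (m : nat) (x : vec n) : R :=
  foldr Rmax 0 (map (fun l => dist_set (K l) x) (iota 0 m)).

Definition shqp_a n (x xp : nat -> vec n) (l : nat) : vec n :=
  vsub (x (l - 1)%nat) (xp l).
Definition shqp_b n (tau : nat -> R) (x xp : nat -> vec n) (l : nat) : R :=
  inner (shqp_a x xp l)
        (vadd (vscale (1 - tau l) (xp l)) (vscale (tau l) (x (l - 1)%nat))).
Definition shqp_F n (pbar : nat) (tau : nat -> R) (x xp : nat -> vec n)
  (i : nat) (y : vec n) : Prop :=
  forall l, (maxn 1 (i - pbar) <= l)%nat -> (l <= i)%nat ->
    inner (shqp_a x xp l) y <= shqp_b tau x xp l.

Definition shqp_run n (K : nat -> vec n -> Prop) (m pbar : nat) (tau : nat -> R)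
  (x0 : vec n) (x : nat -> vec n) : Prop :=
  x 0%nat = x0 /\
  exists (jb : nat -> nat) (xp : nat -> vec n), forall i, (1 <= i)%nat ->
    [/\ (jb i < m)%nat,
        (forall j, (j < m)%nat ->
           dist_set (K j) (x (i - 1)%nat) <= dist_set (K (jb i)) (x (i - 1)%nat)),
        proj_set (K (jb i)) (x (i - 1)%nat) (xp i)
      & proj_set (shqp_F pbar tau x xp i) (x (i - 1)%nat) (x i)].

(* Main.v *)
Require Import Defs.
From Stdlib Require Import Reals ClassicalEpsilon Lra Psatz FunctionalExtensionality Classical PropExtensionality.
From mathcomp Require Import all_boot.
Open Scope R_scope.
Set Implicit Arguments. Unset Strict Implicit.


Section Sums.
Variable n : nat.

Lemma sum_add (f g : 'I_n -> R) :
  \big[Rplus/0]_(i < n) (f i + g i) = \big[Rplus/0]_(i < n) f i + \big[Rplus/0]_(i < n) g i.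
Proof. elim/big_rec3: _ => [|i a b c _ ->]; ring. Qed.

Lemma sum_scale c (f : 'I_n -> R) :
  \big[Rplus/0]_(i < n) (c * f i) = c * \big[Rplus/0]_(i < n) f i.
Proof. elim/big_rec2: _ => [|i a b _ ->]; ring. Qed.

Lemma sum_le (f g : 'I_n -> R) : (forall i, f i <= g i) ->
  \big[Rplus/0]_(i < n) f i <= \big[Rplus/0]_(i < n) g i.
Proof. move=> H; elim/big_rec2: _ => [|i a b _ Hab]; [lra|]. by apply Rplus_le_compat. Qed.

Lemma sum_ge0_seq (r : seq 'I_n) (f : 'I_n -> R) : (forall i, 0 <= f i) ->
  0 <= \big[Rplus/0]_(i <- r) f i.
Proof. move=> H; elim/big_rec: _ => [|i a _ Ha]; [lra|]. by have := H i; intros; lra. Qed.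

Lemma le_addl (a b : R) : 0 <= a -> b <= a + b. Proof. intros; lra. Qed.
Lemma le_addr (a b : R) : 0 <= b -> a <= a + b. Proof. intros; lra. Qed.

Lemma sum_ge_term (f : 'I_n -> R) i : (forall j, 0 <= f j) ->
  f i <= \big[Rplus/0]_(j < n) f j.
Proof.
move=> H; have : i \in index_enum 'I_n by apply: mem_index_enum.
elim: (index_enum _) => // j r IH; rewrite inE big_cons /= => /orP [/eqP <-|/IH].
- by apply: le_addr; apply: sum_ge0_seq.
- move=> h; apply: (Rle_trans _ _ _ h); apply: le_addl; apply: H.
Qed.

Lemma sum_ext (f g : 'I_n -> R) : (forall i, f i = g i) ->
  \big[Rplus/0]_(i < n) f i = \big[Rplus/0]_(i < n) g i.
Proof. by move=> H; apply: eq_bigr => i _. Qed.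

End Sums.

Section Vec.
Variable n : nat.
Implicit Types x y z u w : vec n.

Lemma inner_sym x y : inner x y = inner y x.
Proof. by apply: sum_ext => i; ring. Qed.

Lemma inner_addl x y z : inner (vadd x y) z = inner x z + inner y z.
Proof. rewrite /inner -sum_add; apply: sum_ext => i; rewrite /vadd; ring. Qed.

Lemma inner_addr x y z : inner z (vadd x y) = inner z x + inner z y.
Proof. rewrite /inner -sum_add; apply: sum_ext => i; rewrite /vadd; ring. Qed.

Lemma inner_subl x y z : inner (vsub x y) z = inner x z - inner y z.
Proof.
rewrite /inner /Rminus -(Rmult_1_l (\big[Rplus/0]_(i<n) (y i * z i))) Ropp_mult_distr_l.
rewrite -sum_scale -sum_add; apply: sum_ext => i; rewrite /vsub; ring.
Qed.

Lemma inner_subr x y z : inner z (vsub x y) = inner z x - inner z y.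
Proof. by rewrite inner_sym inner_subl (inner_sym x) (inner_sym y). Qed.

Lemma inner_scalel c x y : inner (vscale c x) y = c * inner x y.
Proof. rewrite /inner -sum_scale; apply: sum_ext => i; rewrite /vscale; ring. Qed.

Lemma inner_scaler c x y : inner y (vscale c x) = c * inner y x.
Proof. rewrite /inner -sum_scale; apply: sum_ext => i; rewrite /vscale; ring. Qed.

Lemma inner_ge0 x : 0 <= inner x x.
Proof. apply: sum_ge0_seq => i; intros; nra. Qed.

Lemma vnorm_ge0 x : 0 <= vnorm x.
Proof. apply: sqrt_pos. Qed.

Lemma vnorm_sq x : vnorm x * vnorm x = inner x x.
Proof. apply: sqrt_sqrt; apply: inner_ge0. Qed.

Lemma inner_sub_sq u w :
  inner (vsub u w) (vsub u w) = inner u u - 2 * inner u w + inner w w.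
Proof. rewrite !inner_subl !inner_subr (inner_sym w u); ring. Qed.

Lemma CS x y : inner x y <= vnorm x * vnorm y.
Proof.
set A := inner x x; set B := inner y y; set c := inner x y.
have key : forall t, 0 <= t * t * A - 2 * t * c + B.
  move=> t; have := inner_ge0 (vsub (vscale t x) y).
  rewrite inner_sub_sq !inner_scalel inner_scaler /A /B /c; intros; lra.
have hA : 0 <= A := inner_ge0 x; have hB : 0 <= B := inner_ge0 y.
have nx := vnorm_sq x; have ny := vnorm_sq y.
have gx := vnorm_ge0 x; have gy := vnorm_ge0 y.
fold A in nx; fold B in ny. clearbody A B c.
case: (Rle_lt_dec c 0) => hc; first by intros; nra.
case: (Rle_lt_or_eq_dec 0 A hA) => [hApos|hA0].
  have h := key (c / A).
  have e : c / A * (c / A) * A - 2 * (c / A) * c + B = B - c * c / A by field; lra.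
  rewrite e in h.
  have h3 : c * c / A <= B by lra.
  have h4 := Rmult_le_compat_l A _ _ (Rlt_le _ _ hApos) h3.
  have e2 : A * (c * c / A) = c * c by field; lra.
  rewrite e2 in h4.
  have hp : 0 <= vnorm x * vnorm y by apply: Rmult_le_pos.
  have hpp : (vnorm x * vnorm y) * (vnorm x * vnorm y) = A * B by rewrite -nx -ny; ring.
  move: hp hpp; generalize (vnorm x * vnorm y) => p hp hpp.
  clear e h h3 e2 key nx ny gx gy; nra.
have h := key ((B + 1) / (2 * c)).
rewrite -hA0 in h.
have e : 2 * ((B + 1) / (2 * c)) * c = B + 1 by field; lra.
rewrite e in h; lra.
Qed.

Lemma vnorm_add_le u w : vnorm (vadd u w) <= vnorm u + vnorm w.
Proof.
have h := vnorm_sq (vadd u w); rewrite inner_addl !inner_addr in h.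
have := CS u w; have := vnorm_sq u; have := vnorm_sq w.
have := vnorm_ge0 u; have := vnorm_ge0 w; have := vnorm_ge0 (vadd u w).
rewrite (inner_sym w u) in h; intros; nra.
Qed.

Lemma vdist_triangle x y z : vdist x z <= vdist x y + vdist y z.
Proof.
rewrite /vdist.
have -> : vsub x z = vadd (vsub x y) (vsub y z)
  by apply: functional_extensionality => i; rewrite /vsub /vadd; ring.
apply: vnorm_add_le.
Qed.

Lemma vdist_sym x y : vdist x y = vdist y x.
Proof. rewrite /vdist /vnorm; f_equal; apply: sum_ext => i; rewrite /vsub; ring. Qed.

Lemma vdist_ge0 x y : 0 <= vdist x y.
Proof. apply: vnorm_ge0. Qed.

Lemma vdist_refl x : vdist x x = 0.
Proof.
rewrite /vdist /vnorm.
have -> : inner (vsub x x) (vsub x x) = 0 * inner x x.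
  rewrite -inner_scalel; apply: sum_ext => i; rewrite /vsub /vscale; ring.
by rewrite Rmult_0_l sqrt_0.
Qed.

Lemma coord_le x i : Rabs (x i) <= vnorm x.
Proof.
have := @sum_ge_term n (fun j => x j * x j) i (fun j => ltac:(nra)).
change (\big[Rplus/0]_(j < n) (x j * x j)) with (inner x x).
rewrite -vnorm_sq => h.
have := vnorm_ge0 x; have := Rabs_pos (x i).
have : Rabs (x i) * Rabs (x i) = x i * x i by rewrite -Rabs_mult Rabs_right; intros; nra.
nra.
Qed.

Lemma vsub_norm_le u w : vnorm (vsub u w) <= vnorm u + vnorm w.
Proof.
have -> : vsub u w = vadd u (vscale (-1) w)
  by apply: functional_extensionality => i; rewrite /vsub /vadd /vscale; ring.
have -> : vnorm w = vnorm (vscale (-1) w).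
  rewrite /vnorm inner_scalel inner_scaler; f_equal; ring.
apply: vnorm_add_le.
Qed.

End Vec.


Lemma le_of_eps (a b : R) : (forall e, 0 < e -> a <= b + e) -> a <= b.
Proof.
move=> h; case: (Rle_lt_dec a b) => // hab.
have := h ((a - b) / 2) ltac:(lra); lra.
Qed.

Lemma archi (e : R) : 0 < e -> exists N : nat, / (INR N + 1) < e.
Proof.
move=> he; have [N hN] := INR_archimed e 1 ltac:(lra).
exists N; have hp := pos_INR N.
apply: (Rmult_lt_reg_l (INR N + 1)); first lra.
rewrite Rinv_r; nra.
Qed.

Lemma inv_INR_le (a b : nat) : (a <= b)%N -> / (INR b + 1) <= / (INR a + 1).
Proof.
move=> /leP h; have := le_INR _ _ h; have := pos_INR a => h1 h2.
apply: Rinv_le_contravar; lra.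
Qed.

Arguments inv_INR_le {a b}.

Lemma inv_INR_pos (a : nat) : 0 < / (INR a + 1).
Proof. have := pos_INR a; move=> h; apply: Rinv_0_lt_compat; lra. Qed.

Lemma le_tr {a b c : nat} : (a <= b)%N -> (b <= c)%N -> (a <= c)%N.
Proof. exact: leq_trans. Qed.

Lemma sq_lt (a b : R) : Rabs a < b -> a * a <= b * b.
Proof. move=> h; have := Rsqr_abs a; rewrite /Rsqr; have := Rabs_pos a; intros; nra. Qed.

Lemma norm_lt (v q a e : R) : 0 <= v -> v * v = q -> q <= a -> a < e * e -> 0 < e -> v < e.
Proof. intros; nra. Qed.
Arguments norm_lt {v q a e}.
Arguments sq_lt {a b}.

Definition incr (phi : nat -> nat) := forall t, (phi t < phi t.+1)%N.

Lemma incr_ge phi : incr phi -> forall t, (t <= phi t)%N.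
Proof.
move=> h; elim=> // t IH; exact: leq_ltn_trans IH (h t).
Qed.

Lemma incr_mono phi : incr phi -> forall a b, (a <= b)%N -> (phi a <= phi b)%N.
Proof.
move=> h a b /subnK <-.
have H : forall k, (phi a <= phi (k + a))%N.
  elim=> // k IH; rewrite addSn; exact: le_tr IH (ltnW (h _)).
exact: H.
Qed.

Lemma incr_comp phi psi : incr phi -> incr psi -> incr (fun t => phi (psi t)).
Proof.
move=> hp hq t; have := hq t => h.
exact: le_tr (hp (psi t)) (incr_mono hp h).
Qed.

Lemma Un_cv_sub (v : nat -> R) l phi : incr phi -> Un_cv v l -> Un_cv (fun t => v (phi t)) l.
Proof.
move=> hp hv e he; have [N hN] := hv e he; exists N => t /leP ht.
apply: hN; apply/leP; exact: le_tr ht (incr_ge hp t).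
Qed.

Section BW.

Definition pickn (u : nat -> R) (l : R) (N : nat) (e : R) : nat :=
  epsilon (inhabits 0%nat) (fun p => (N <= p)%N /\ Rabs (u p - l) < e).

Fixpoint sub_idx (u : nat -> R) (l : R) (t : nat) : nat :=
  pickn u l (match t with 0%nat => 0%nat | t'.+1 => (sub_idx u l t').+1 end) (/ (INR t + 1)).

Lemma pickn_spec u l N e : ValAdh u l -> 0 < e ->
  (N <= pickn u l N e)%N /\ Rabs (u (pickn u l N e) - l) < e.
Proof.
move=> hv he; apply: (epsilon_spec (inhabits 0%nat) (fun p => (N <= p)%N /\ Rabs (u p - l) < e)).
have [|p [hp1 hp2]] := hv (fun r => Rabs (r - l) < e) N.
  by exists (mkposreal e he) => y.
by exists p; split => //; apply/leP.
Qed.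

Lemma bw_R (u : nat -> R) M : (forall t, Rabs (u t) <= M) ->
  exists phi, incr phi /\ exists l, Un_cv (fun t => u (phi t)) l.
Proof.
move=> hM.
have [l hl] := Bolzano_Weierstrass u (fun c => -M <= c <= M) (compact_P3 (-M) M)
  (fun t => ltac:(have := Rle_abs (u t); have := Rle_abs (- u t); rewrite Rabs_Ropp;
                   have := hM t; intros; lra)).
exists (sub_idx u l); split.
  move=> t; have [h _] := pickn_spec (u:=u) (l:=l) (e:=/ (INR t.+1 + 1)) ((sub_idx u l t).+1) hl (inv_INR_pos _).
  exact: h.
exists l => e he; have [N hN] := archi he; exists N => t /leP ht.
have h : Rabs (u (sub_idx u l t) - l) < / (INR t + 1).
  case: t {ht} => [|t]; [exact: (pickn_spec _ hl (inv_INR_pos _)).2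
                        |exact: (pickn_spec _ hl (inv_INR_pos _)).2].
rewrite /Rdist; have := inv_INR_le ht; intros; lra.
Qed.

End BW.

Section Conv.
Variable n : nat.

Lemma coord_conv (s : nat -> vec n) (y : vec n) :
  (forall i, Un_cv (fun t => s t i) (y i)) -> seq_cv s y.
Proof.
move=> hc e he.
set c := \big[Rplus/0]_(i < n) 1.
have hcd : c = \big[Rplus/0]_(i < n) 1 by [].
clearbody c.
have hc0 : 0 <= c by rewrite hcd; apply: sum_ge0_seq => i; lra.
have heta : 0 < e / (c + 1) by apply: Rdiv_lt_0_compat; lra.
have h2 : e / (c + 1) * (e / (c + 1)) * c < e * e.
  have -> : e / (c + 1) * (e / (c + 1)) * c = (e * e) * (c / ((c + 1) * (c + 1))) by field; lra.
  have : c / ((c + 1) * (c + 1)) < 1.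
    apply: (Rmult_lt_reg_r ((c + 1) * (c + 1))); first nra.
    rewrite /Rdiv Rmult_assoc Rinv_l; nra.
  move=> hq; have he2 : 0 < e * e by nra.
  have := Rmult_lt_compat_l (e * e) _ _ he2 hq; rewrite Rmult_1_r; done.
set eta := e / (c + 1) in heta h2 *.
clearbody eta.
pose f (i : 'I_n) := epsilon (inhabits 0%nat)
  (fun N => forall t, (t >= N)%coq_nat -> Rdist (s t i) (y i) < eta).
have hf : forall i t, (f i <= t)%N -> Rabs (s t i - y i) < eta.
  move=> i t ht.
  have := epsilon_spec (inhabits 0%nat)
     (fun N => forall t, (t >= N)%coq_nat -> Rdist (s t i) (y i) < eta) (hc i eta heta).
  move=> h; apply: h; apply/leP; exact: ht.
clearbody f.
exists (\max_(i < n) f i) => t ht.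
have hle : inner (vsub (s t) y) (vsub (s t) y) <= eta * eta * c.
  rewrite hcd -sum_scale; apply: sum_le => i.
  have := hf i t (le_tr (leq_bigmax (F:=f) i) ht).
  rewrite /vsub Rmult_1_r => h; exact: sq_lt.
rewrite /vdist; exact: (norm_lt (vnorm_ge0 _) (vnorm_sq _) hle h2 he).
Qed.

Lemma bw_vec (u : nat -> vec n) M : (forall t, vnorm (u t) <= M) ->
  exists phi, incr phi /\ exists y, seq_cv (fun t => u (phi t)) y.
Proof.
move=> hM.
have step : forall k, exists phi, incr phi /\
    forall i : 'I_n, (i < k)%N -> exists l, Un_cv (fun t => u (phi t) i) l.
  elim=> [|k [phi [hp hc]]].
    by exists (fun t => t); split => // t.
  case: (ltnP k n) => hk.
  - pose i0 := Ordinal hk.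
    have [psi [hq [l hl]]] := @bw_R (fun t => u (phi t) i0) M
      (fun t => Rle_trans _ _ _ (coord_le _ _) (hM _)).
    exists (fun t => phi (psi t)); split; first exact: incr_comp.
    move=> i; rewrite ltnS leq_eqVlt => /orP [/eqP hi|hi].
    + have -> : i = i0 by apply: val_inj.
      by exists l.
    + have [l' hl'] := hc i hi; exists l'.
      exact: (Un_cv_sub hq hl').
  - exists phi; split => // i hi; apply: hc.
    exact: le_tr (ltn_ord i) hk.
have [phi [hp hc]] := step n.
exists phi; split => //.
exists (fun i => epsilon (inhabits 0) (fun l => Un_cv (fun t => u (phi t) i) l)).
apply: coord_conv => i.
exact: (epsilon_spec (inhabits 0) (fun l => Un_cv (fun t => u (phi t) i) l) (hc i (ltn_ord i))).
Qed.

Lemma cauchy_vec (s : nat -> vec n) :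
  (forall e, 0 < e -> exists N, forall j k, (N <= j)%N -> (N <= k)%N -> vdist (s j) (s k) < e) ->
  exists y, seq_cv s y.
Proof.
move=> hC.
have hc : forall i, Cauchy_crit (fun t => s t i).
  move=> i e he; have [N hN] := hC e he; exists N => j k /leP hj /leP hk.
  have h1 : Rabs (s j i - s k i) <= vdist (s j) (s k) := coord_le (vsub (s j) (s k)) i.
  exact: (Rle_lt_trans _ _ _ h1 (hN j k hj hk)).
exists (fun i => proj1_sig (R_complete _ (hc i))).
apply: coord_conv => i; exact: (proj2_sig (R_complete _ (hc i))).
Qed.

End Conv.


Lemma half_pos (e : R) : 0 < e -> 0 < e / 2.
Proof. intros; lra. Qed.

Section Dist.
Variable n : nat.
Implicit Types (C : vec n -> Prop) (x y p : vec n).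

Lemma dist_exists C x : (exists y, C y) -> exists r, is_dist_to C x r.
Proof.
move=> [y0 hy0].
pose E := fun r => exists y, C y /\ r = - vdist x y.
have hb : bound E.
  exists 0 => r [y [_ ->]]; have := vdist_ge0 x y; intros; lra.
have [m [hub hlub]] := completeness E hb (ex_intro _ (- vdist x y0) (ex_intro _ y0 (conj hy0 erefl))).
exists (- m); split.
- move=> y hy; have := hub (- vdist x y) (ex_intro _ y (conj hy erefl)); intros; lra.
- move=> r' hr'.
  have : m <= - r'.
    apply: hlub => r [y [hy ->]]; have := hr' y hy; intros; lra.
  intros; lra.
Qed.

Lemma dist_spec C x : (exists y, C y) -> is_dist_to C x (dist_set C x).
Proof.
move=> h; apply: (epsilon_spec (inhabits 0) (fun r => is_dist_to C x r)); exact: dist_exists.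
Qed.

Lemma dist_le C x y : C y -> dist_set C x <= vdist x y.
Proof. move=> hy; exact: ((dist_spec x (ex_intro _ y hy)).1 y hy). Qed.

Lemma dist_ge0 C x : (exists y, C y) -> 0 <= dist_set C x.
Proof.
move=> h; apply: (dist_spec x h).2 => y _; exact: vdist_ge0.
Qed.

Lemma dist_approx C x e : (exists y, C y) -> 0 < e ->
  exists y, C y /\ vdist x y < dist_set C x + e.
Proof.
move=> h he; apply: NNPP => hn.
have : dist_set C x + e <= dist_set C x.
  apply: (dist_spec x h).2 => y hy.
  case: (Rlt_le_dec (vdist x y) (dist_set C x + e)) => // hlt.
  by exfalso; apply: hn; exists y.
intros; lra.
Qed.

Lemma dist_proj C x p : proj_set C x p -> dist_set C x = vdist x p.
Proof.
move=> [hp hmin]; apply: Rle_antisym; first exact: dist_le.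
apply: (dist_spec x (ex_intro _ p hp)).2 => y hy; exact: hmin.
Qed.

Lemma dist_mono C C' x : (forall y, C y -> C' y) -> (exists y, C y) ->
  dist_set C' x <= dist_set C x.
Proof.
move=> hs [y hy]; apply: (dist_spec x (ex_intro _ y hy)).2 => z hz.
exact: dist_le (hs z hz).
Qed.

Lemma vnorm_le_dist x y : vnorm y <= vnorm x + vdist x y.
Proof.
have -> : y = vsub x (vsub x y) by apply: functional_extensionality => i; rewrite /vsub; ring.
rewrite /vdist; have -> : vsub x (vsub x (vsub x y)) = vsub x y
  by apply: functional_extensionality => i; rewrite /vsub; ring.
exact: vsub_norm_le.
Qed.

Lemma proj_exists C x : vclosed_set C -> (exists y, C y) -> exists p, proj_set C x p.
Proof.
move=> hcl hne.
pose ys t := epsilon (inhabits x) (fun y => C y /\ vdist x y < (dist_set C x) + / (INR t + 1)).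
have hys : forall t, C (ys t) /\ vdist x (ys t) < (dist_set C x) + / (INR t + 1).
  move=> t; apply: (epsilon_spec (inhabits x) (fun y => C y /\ vdist x y < (dist_set C x) + / (INR t + 1))).
  exact: dist_approx (inv_INR_pos t).
clearbody ys.
have hb : forall t, vnorm (ys t) <= vnorm x + (dist_set C x) + 1.
  move=> t; have := vnorm_le_dist x (ys t); have [_ h] := hys t.
  have : / (INR t + 1) <= / (INR 0 + 1) by apply: inv_INR_le.
  rewrite /= Rplus_0_l Rinv_1; intros; lra.
have [phi [hp [y hy]]] := bw_vec hb.
have hyC : C y.
  apply: hcl => e he; have [N hN] := hy e he.
  exists (ys (phi N)); split; first exact: (hys _).1.
  rewrite vdist_sym; exact: hN.
exists y; split => // w hw.
apply: Rle_trans (dist_le x hw).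
apply: le_of_eps => e he.
have [N1 hN1] := archi (half_pos he).
have [N2 hN2] := hy (e / 2) (half_pos he).
set t := maxn N1 N2.
have htN1 : (N1 <= t)%N by apply: leq_maxl.
have htN2 : (N2 <= t)%N by apply: leq_maxr.
clearbody t.
have h1 := hN2 t htN2.
have [_ h2] := hys (phi t).
have h3 : / (INR (phi t) + 1) <= / (INR N1 + 1).
  apply: inv_INR_le; exact: le_tr htN1 (incr_ge hp t).
have h4 := vdist_triangle x (ys (phi t)) y.
lra.
Qed.

End Dist.


Section Geo.
Variable n : nat.
Implicit Types (C F : vec n -> Prop) (x y z p q u w : vec n).

Definition convex F := forall a b t, F a -> F b -> 0 <= t <= 1 ->
  F (vadd (vscale (1 - t) a) (vscale t b)).

Lemma vdist_sq x y : vdist x y * vdist x y = inner (vsub x y) (vsub x y).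
Proof. exact: vnorm_sq. Qed.

Lemma sq_le (a b : R) : 0 <= a -> a <= b -> a * a <= b * b.
Proof. intros; nra. Qed.

Lemma proj_pyth F x p z : convex F -> proj_set F x p -> F z ->
  vdist x p * vdist x p + vdist p z * vdist p z <= vdist x z * vdist x z.
Proof.
move=> hc [hp hmin] hz.
set u := vsub x p; set w := vsub z p.
have key : forall t, 0 < t <= 1 -> 2 * inner u w <= t * inner w w.
  move=> t ht.
  have hq := hc p z t hp hz ltac:(lra).
  have h := sq_le (vdist_ge0 x p) (hmin _ hq).
  rewrite !vdist_sq in h.
  have e : vsub x (vadd (vscale (1 - t) p) (vscale t z)) = vsub u (vscale t w).
    by apply: functional_extensionality => i; rewrite /u /w /vsub /vadd /vscale; ring.
  rewrite e (inner_sub_sq u (vscale t w)) !inner_scaler !inner_scalel in h.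
  have : 0 <= t * (t * inner w w - 2 * inner u w) by fold u in h; nra.
  move=> h2; have := Rmult_le_0_lt_compat; nra.
have huw : inner u w <= 0.
  apply: le_of_eps => e he; rewrite Rplus_0_l.
  have hw := inner_ge0 w.
  have ht : 0 < e / (inner w w + e) <= 1.
    split; first by apply: Rdiv_lt_0_compat; lra.
    apply: (Rmult_le_reg_r (inner w w + e)); first lra.
    rewrite /Rdiv Rmult_assoc Rinv_l; lra.
  have := key _ ht.
  have : e / (inner w w + e) * inner w w <= e.
    apply: (Rmult_le_reg_r (inner w w + e)); first lra.
    have -> : e / (inner w w + e) * inner w w * (inner w w + e) = e * inner w w by field; lra.
    nra.
  intros; lra.
rewrite (vdist_sym p z) !vdist_sq.
have -> : vsub x z = vsub u w
  by apply: functional_extensionality => i; rewrite /u /w /vsub; ring.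
fold u w; rewrite (inner_sub_sq u w); lra.
Qed.

Lemma prox_normal C x p : proj_set C x p -> lim_normal C p (vsub x p).
Proof.
move=> [hp hmin].
have hreg : reg_normal C p (vsub x p).
  split => // e he; exists (2 * e); split; first lra.
  move=> z hz hzp.
  have h := sq_le (vdist_ge0 x p) (hmin z hz).
  rewrite !vdist_sq in h.
  have e1 : vsub x z = vsub (vsub x p) (vsub z p)
    by apply: functional_extensionality => i; rewrite /vsub; ring.
  rewrite e1 (inner_sub_sq (vsub x p) (vsub z p)) in h.
  have h2 := vdist_sq z p. have h3 := vdist_ge0 z p.
  nra.
exists (fun _ => p), (fun _ => vsub x p); split => //; split.
  by move=> e he; exists 0%nat => i _; rewrite vdist_refl.
split => // e he; exists 0%nat => i _; rewrite vdist_refl; exact: he.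
Qed.

Lemma halfspace_convex (a : vec n) b a1 a2 t : inner a a1 <= b -> inner a a2 <= b -> 0 <= t <= 1 ->
  inner a (vadd (vscale (1 - t) a1) (vscale t a2)) <= b.
Proof.
move=> h1 h2 ht; rewrite inner_addr !inner_scaler.
have := Rmult_le_compat_l (1 - t) _ _ ltac:(lra) h1.
have := Rmult_le_compat_l t _ _ ltac:(lra) h2.
intros; lra.
Qed.

Lemma halfspace_closed (a : vec n) b q :
  (forall e, 0 < e -> exists y, inner a y <= b /\ vdist q y < e) -> inner a q <= b.
Proof.
move=> h; apply: le_of_eps => e he.
have hna := vnorm_ge0 a.
have [y [hy hqy]] := h (e / (vnorm a + 1)) ltac:(apply: Rdiv_lt_0_compat; lra).
have e1 : inner a q = inner a y + inner a (vsub q y) by rewrite inner_subr; ring.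
have h2 := CS a (vsub q y).
have h3 : vnorm a * vnorm (vsub q y) <= e.
  have : vnorm a * vnorm (vsub q y) <= vnorm a * (e / (vnorm a + 1)).
    apply: Rmult_le_compat_l => //; exact: Rlt_le.
  have : vnorm a * (e / (vnorm a + 1)) <= e.
    apply: (Rmult_le_reg_r (vnorm a + 1)); first lra.
    have -> : vnorm a * (e / (vnorm a + 1)) * (vnorm a + 1) = vnorm a * e by field; lra.
    nra.
  intros; lra.
lra.
Qed.

End Geo.


Lemma sub1S k : (k.+1 - 1)%N = k.
Proof. by rewrite subn1. Qed.

Lemma foldr_max_le (f : nat -> R) (r : seq nat) M :
  (forall a, a \in r -> f a <= M) -> 0 <= M -> foldr Rmax 0 (map f r) <= M.
Proof.
elim: r => //= a r IH h hM; apply: Rmax_lub.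
  by apply: h; rewrite inE eqxx.
by apply: IH => // b hb; apply: h; rewrite inE hb orbT.
Qed.

Lemma foldr_max_ge (f : nat -> R) (r : seq nat) a :
  a \in r -> f a <= foldr Rmax 0 (map f r).
Proof.
elim: r => //= b r IH; rewrite inE => /orP [/eqP ->|h]; first exact: Rmax_l.
exact: Rle_trans (IH h) (Rmax_r _ _).
Qed.

Lemma lim_le n (x : nat -> vec n) xbar w M :
  seq_cv x xbar -> (exists N, forall k, (N <= k)%N -> vdist (x k) w <= M) -> vdist xbar w <= M.
Proof.
move=> hc [N hN]; apply: le_of_eps => e he.
have [N2 hN2] := hc e he.
have h1 := hN2 (maxn N N2) (leq_maxr _ _).
have h2 := hN (maxn N N2) (leq_maxl _ _).
have h3 := vdist_triangle xbar (x (maxn N N2)) w.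
rewrite vdist_sym in h1; lra.
Qed.

Lemma argmax_exists (f : nat -> R) (m : nat) : (0 < m)%N ->
  exists j, (j < m)%N /\ forall j', (j' < m)%N -> f j' <= f j.
Proof.
elim: m => // m IH _; case: (posnP m) => hm0.
  exists 0%N; split => // j'; rewrite hm0 ltnS leqn0 => /eqP ->; lra.
have [j [hj hmax]] := IH hm0.
case: (Rle_lt_dec (f m) (f j)) => h.
  exists j; split; first exact: ltnW.
  move=> j'; rewrite ltnS leq_eqVlt => /orP [/eqP ->|hj'] //; exact: hmax.
exists m; split => // j'; rewrite ltnS leq_eqVlt => /orP [/eqP ->|hj']; first lra.
have := hmax j' hj'; lra.
Qed.

Definition upd T (f : nat -> T) i v := fun k => if k == i then v else f k.

Section Main.
Variables (n m : nat) (K : nat -> vec n -> Prop) (xs : vec n) (beta tau : R) (pbar : nat).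
Hypothesis hm : (0 < m)%N.
Hypothesis hcl : forall l, (l < m)%N -> vclosed_set (K l).
Hypothesis hxs : inter K m xs.
Hypothesis hb : 1 <= beta.
Hypothesis htau : 0 < tau < 1.
Variables (r1 rd : R) (V1 : vec n -> Prop).
Hypothesis hV1 : forall y, vdist y xs < r1 -> V1 y.
Hypothesis hmet : forall y, V1 y -> dist_set (inter K m) y <= beta * maxd K m y.
Variables rho s delta : R.
Hypothesis hrho0 : 0 <= rho.
Hypothesis hrho1 : rho < 1.
Hypothesis hrho2 : rho * rho * (beta * beta) = beta * beta - (1 - tau) * (1 - tau).
Hypothesis hs : s * (1 - rho) = 1.
Hypothesis hdelta : 0 <= delta.
Hypothesis hdC : delta * ((1 + s) * beta + 1) <= tau.
Hypothesis hSR : forall l, (l < m)%N -> forall z y v, K l z -> vdist z xs < rd ->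
  K l y -> vdist y xs < rd -> lim_normal (K l) y v ->
  inner (vsub z y) v <= delta * vdist z y * vnorm v.
Variable x0 : vec n.
Hypothesis he0rd : (2 + s) * vdist x0 xs < rd.
Hypothesis he0r1 : (1 + s) * vdist x0 xs < r1.

Lemma s_ge1 : 1 <= s.
Proof. nra. Qed.

Lemma inter_ne : exists y, inter K m y.
Proof. by exists xs. Qed.

Lemma inter_closed : vclosed_set (inter K m).
Proof.
move=> y h l hl; apply: (hcl hl) => e he; have [z [hz hd]] := h e he.
by exists z; split => //; apply: hz.
Qed.

Section Run.
Variables (x xp : nat -> vec n) (jb : nat -> nat).
Hypothesis hx0 : x 0%N = x0.

Definition dd k := dist_set (inter K m) (x k).
Definition DD k := vdist (x k) (xp k.+1).
Definition cond3 i := [/\ (jb i < m)%N,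
  (forall j, (j < m)%N -> dist_set (K j) (x (i - 1)%N) <= dist_set (K (jb i)) (x (i - 1)%N))
  & proj_set (K (jb i)) (x (i - 1)%N) (xp i)].
Definition condF i := proj_set (shqp_F pbar (fun _ => tau) x xp i) (x (i - 1)%N) (x i).
Definition HypN N := forall i, (1 <= i)%N -> (i <= N)%N -> cond3 i /\ condF i.
Definition Inv N := forall k, (k < N)%N ->
  vdist (x k.+1) (x k) <= s * (dd k - dd k.+1) /\ dd k.+1 <= rho * dd k.

Lemma dd_ge0 k : 0 <= dd k.
Proof. exact: dist_ge0 inter_ne. Qed.

Lemma D_le_d k : cond3 k.+1 -> DD k <= dd k.
Proof.
case=> hj _; rewrite sub1S => hp.
rewrite /DD -(dist_proj hp) /dd; apply: dist_mono; last exact: inter_ne.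
by move=> y hy; apply: hy.
Qed.

Lemma DD_ge0 k : 0 <= DD k.
Proof. exact: vdist_ge0. Qed.

Lemma maxd_eq k : cond3 k.+1 -> maxd K m (x k) = DD k.
Proof.
case=> hj hmax; rewrite sub1S in hmax *; move=> hp.
rewrite /DD -(dist_proj hp) /maxd.
apply: Rle_antisym.
  apply: foldr_max_le; last by apply: dist_ge0; exists xs; apply: hxs.
  by move=> a; rewrite mem_iota add0n /= => ha; apply: hmax.
by apply: (foldr_max_ge (fun l => dist_set (K l) (x k))); rewrite mem_iota add0n.
Qed.

Lemma metric k : cond3 k.+1 -> vdist (x k) xs < r1 -> dd k <= beta * DD k.
Proof. move=> c h; rewrite -maxd_eq //; exact: hmet (hV1 h). Qed.

Lemma tele N : Inv N -> forall j t, (j + t <= N)%N ->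
  vdist (x (j + t)) (x j) <= s * (dd j - dd (j + t)) /\ dd (j + t) <= dd j.
Proof.
move=> hI j; elim=> [|t IH] h.
  rewrite addn0 vdist_refl; have := s_ge1; lra.
rewrite addnS in h *.
have [h1 h2] := IH (ltnW h).
have [h3 h4] := hI _ h.
have h5 := vdist_triangle (x (j + t).+1) (x (j + t)) (x j).
have h6 := dd_ge0 (j + t). have h7 := dd_ge0 (j + t).+1.
have h8 : rho * dd (j + t) <= dd (j + t) by nra.
split; lra.
Qed.

Lemma tele' N : Inv N -> forall j k, (j <= k)%N -> (k <= N)%N ->
  vdist (x k) (x j) <= s * (dd j - dd k) /\ dd k <= dd j.
Proof.
move=> hI j k hjk hkN; have := tele (j:=j) (t:=(k - j)%N) hI.
by rewrite subnKC //; apply.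
Qed.

Lemma bounds N : Inv N -> forall k, (k <= N)%N ->
  dd k <= vdist x0 xs /\ vdist (x k) xs <= (1 + s) * vdist x0 xs.
Proof.
move=> hI k hk.
have [h1 h2] := tele' hI (leq0n k) hk.
have h0 : dd 0 <= vdist x0 xs by rewrite /dd hx0; apply: dist_le.
have h3 := vdist_triangle (x k) (x 0) xs.
rewrite hx0 in h1 h3.
have := dd_ge0 k; have := s_ge1; split; nra.
Qed.

Lemma xk_r1 N k : Inv N -> (k <= N)%N -> vdist (x k) xs < r1.
Proof. move=> hI hk; have [_ h] := bounds hI hk; lra. Qed.

Lemma shqp_b_eq l : shqp_b (fun _ => tau) x xp l =
  inner (shqp_a x xp l) (xp l) + tau * inner (shqp_a x xp l) (shqp_a x xp l).
Proof.
rewrite /shqp_b.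
have -> : vadd (vscale (1 - tau) (xp l)) (vscale tau (x (l - 1)%N)) =
          vadd (xp l) (vscale tau (shqp_a x xp l))
  by apply: functional_extensionality => i; rewrite /shqp_a /vsub /vadd /vscale; ring.
by rewrite inner_addr inner_scaler.
Qed.

Lemma HS k w : cond3 k.+1 -> inter K m w -> vdist w xs < rd -> vdist (xp k.+1) xs < rd ->
  vdist w (x k) <= (1 + s) * beta * DD k ->
  inner (shqp_a x xp k.+1) w <= shqp_b (fun _ => tau) x xp k.+1.
Proof.
case=> hj _; rewrite sub1S => hp hw hwr hpr hwx.
rewrite shqp_b_eq /shqp_a sub1S.
set a := vsub (x k) (xp k.+1).
have hn : vnorm a = DD k by [].
have hsr := hSR hj (hw _ hj) hwr hp.1 hpr (prox_normal hp).
fold a in hsr; rewrite hn in hsr.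
have haa : inner a a = DD k * DD k by rewrite -vnorm_sq hn.
have e1 : inner a w = inner a (xp k.+1) + inner (vsub w (xp k.+1)) a
  by rewrite inner_subl (inner_sym w a) (inner_sym (xp k.+1) a); ring.
have hwp : vdist w (xp k.+1) <= ((1 + s) * beta + 1) * DD k.
  have := vdist_triangle w (x k) (xp k.+1); rewrite -/(DD k); lra.
have hD := DD_ge0 k.
have h2 : delta * vdist w (xp k.+1) * DD k <= delta * (((1 + s) * beta + 1) * DD k) * DD k.
  apply: Rmult_le_compat_r => //; apply: Rmult_le_compat_l => //.
have h3 : delta * (((1 + s) * beta + 1) * DD k) * DD k <= tau * (DD k * DD k).
  have -> : delta * (((1 + s) * beta + 1) * DD k) * DD k =
            (delta * ((1 + s) * beta + 1)) * (DD k * DD k) by ring.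
  apply: Rmult_le_compat_r => //; nra.
rewrite e1 haa; lra.
Qed.

Lemma c3 N k : HypN N -> cond3 N.+1 -> (k <= N)%N -> cond3 k.+1.
Proof.
move=> hH hc hk; case: (ltnP k N) => hkN.
  exact: (hH k.+1 erefl hkN).1.
by have -> : k = N by apply: anti_leq; rewrite hk hkN.
Qed.

Lemma MEM N w : HypN N -> cond3 N.+1 -> Inv N -> inter K m w -> vdist w xs < rd ->
  (forall k, (k <= N)%N -> vdist w (x k) <= (1 + s) * beta * DD k) ->
  shqp_F pbar (fun _ => tau) x xp N.+1 w.
Proof.
move=> hH hc hI hw hwr hwx l hl1 hl2.
case: l hl1 hl2 => [|k]; first by rewrite geq_max.
move=> _ hk; rewrite ltnS in hk.
have ck := c3 hH hc hk.
apply: HS => //; last exact: hwx.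
have [h1 h2] := bounds hI hk.
have h3 := D_le_d ck.
have h4 := vdist_triangle (xp k.+1) (x k) xs.
rewrite (vdist_sym (xp k.+1) (x k)) -/(DD k) in h4.
have := vdist_ge0 x0 xs; lra.
Qed.

Lemma znear N : HypN N -> cond3 N.+1 -> Inv N ->
  exists z, proj_set (inter K m) (x N) z /\ shqp_F pbar (fun _ => tau) x xp N.+1 z.
Proof.
move=> hH hc hI.
have [z hz] := proj_exists (x N) inter_closed inter_ne.
exists z; split => //.
have hzN : vdist z (x N) = dd N by rewrite vdist_sym /dd (dist_proj hz).
apply: MEM => //; first exact: hz.1.
  have [h1 h2] := bounds hI (leqnn N).
  have := vdist_triangle z (x N) xs; have := vdist_ge0 x0 xs; lra.
move=> k hk.
have [h1 h2] := tele' hI hk (leqnn N).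
have h3 := vdist_triangle z (x N) (x k).
have h4 := metric (c3 hH hc hk) (xk_r1 hI hk).
have h5 := dd_ge0 N. have h6 := s_ge1.
have h7 : (1 + s) * dd k <= (1 + s) * (beta * DD k) by apply: Rmult_le_compat_l; lra.
have h8 : 0 <= (s - 1) * dd N by apply: Rmult_le_pos; lra.
rewrite Rmult_assoc; nra.
Qed.


Lemma F_convex i : convex (shqp_F pbar (fun _ => tau) x xp i).
Proof. move=> a b t ha hb2 ht l h1 h2; exact: halfspace_convex (ha l h1 h2) (hb2 l h1 h2) ht. Qed.

Lemma F_closed i : vclosed_set (shqp_F pbar (fun _ => tau) x xp i).
Proof.
move=> q h l h1 h2; apply: halfspace_closed => e he.
have [y [hy hq]] := h e he; exists y; split => //; exact: hy l h1 h2.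
Qed.

Lemma win N : (maxn 1 (N.+1 - pbar) <= N.+1)%N.
Proof. by rewrite geq_max leq_subr. Qed.

Lemma LB N : cond3 N.+1 -> condF N.+1 -> (1 - tau) * DD N <= vdist (x N) (x N.+1).
Proof.
move=> hc hF.
have hin := hF.1 N.+1 (win N) (leqnn _).
rewrite shqp_b_eq /shqp_a sub1S in hin.
set a := vsub (x N) (xp N.+1) in hin.
have e : inner a a = inner a (x N) - inner a (xp N.+1) := inner_subr (x N) (xp N.+1) a.
have hcs : inner a (vsub (x N) (x N.+1)) <= DD N * vdist (x N) (x N.+1) := CS a _.
rewrite inner_subr in hcs.
have haa : inner a a = DD N * DD N by rewrite -vnorm_sq.
have hD := DD_ge0 N. have hA := vdist_ge0 (x N) (x N.+1).
clearbody a.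
have e2 : (1 - tau) * (DD N * DD N) = inner a a - tau * inner a a by rewrite haa; ring.
have key : (1 - tau) * (DD N * DD N) <= DD N * vdist (x N) (x N.+1) by lra.
case: (Rle_lt_or_eq_dec 0 (DD N) hD) => hDp.
  apply: (Rmult_le_reg_l (DD N)) => //; nra.
rewrite -hDp; lra.
Qed.

Lemma sq_le_inv (a b : R) : 0 <= b -> a * a <= b * b -> a <= b.
Proof. intros; nra. Qed.

Lemma step N : HypN N.+1 -> Inv N -> Inv N.+1.
Proof.
move=> hH hI k hk; case: (ltnP k N) => hkN; first exact: hI k hkN.
have ekN : k = N by apply: anti_leq; rewrite hkN -ltnS hk.
subst k.
have hHN : HypN N := fun i h1 h2 => hH i h1 (leqW h2).
have [hc3 hcF] := hH N.+1 erefl (leqnn _).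
have [z [hz hzF]] := znear hHN hc3 hI.
have hcF' := hcF; rewrite /condF sub1S in hcF'.
have hconv : convex (shqp_F pbar (fun _ => tau) x xp N.+1)
  by move=> a b t ha hb2 ht; exact: F_convex ha hb2 ht.
have hp := proj_pyth hconv hcF' hzF.
have hzN : vdist (x N) z = dd N by rewrite /dd (dist_proj hz).
have hdN1 : dd N.+1 <= vdist (x N.+1) z by apply: dist_le; exact: hz.1.
have lb := LB hc3 hcF.
have met := metric hc3 (xk_r1 hI (leqnn N)).
rewrite hzN in hp.
have hA := vdist_ge0 (x N) (x N.+1). have hB := vdist_ge0 (x N.+1) z.
have hdN := dd_ge0 N. have hdN1p := dd_ge0 N.+1. have hD := DD_ge0 N.
move: hp hdN1 lb met hA hB hdN hdN1p hD.
rewrite (vdist_sym (x N.+1) (x N)).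
generalize (vdist (x N) (x N.+1)) (vdist (x N.+1) z) (dd N) (dd N.+1) (DD N) => A B dN dN1 D.
move=> hp hdN1 lb met hA hB hdN hdN1p hD.
have q1 : dN1 * dN1 <= B * B by apply: sq_le.
have q2 : ((1 - tau) * D) * ((1 - tau) * D) <= A * A by apply: sq_le => //; nra.
have q3 : dN * dN <= (beta * D) * (beta * D) by apply: sq_le.
have q4 : (1 - tau) * (1 - tau) * (dN * dN) <= (1 - tau) * (1 - tau) * ((beta * D) * (beta * D))
  by apply: Rmult_le_compat_l => //; nra.
have q5 : dN1 * dN1 <= dN * dN - A * A by lra.
have q6 : beta * beta * (dN1 * dN1) <= beta * beta * (dN * dN - A * A)
  by apply: Rmult_le_compat_l; nra.
have q7 : beta * beta * (A * A) >= (1 - tau) * (1 - tau) * ((beta * D) * (beta * D)).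
  have -> : (1 - tau) * (1 - tau) * ((beta * D) * (beta * D)) =
            beta * beta * (((1 - tau) * D) * ((1 - tau) * D)) by ring.
  apply: Rle_ge; apply: Rmult_le_compat_l => //; nra.
have q8 : (beta * dN1) * (beta * dN1) <= (rho * beta * dN) * (rho * beta * dN).
  have -> : (rho * beta * dN) * (rho * beta * dN) = (rho * rho * (beta * beta)) * (dN * dN) by ring.
  rewrite hrho2.
  have -> : (beta * dN1) * (beta * dN1) = beta * beta * (dN1 * dN1) by ring.
  have -> : (beta * beta - (1 - tau) * (1 - tau)) * (dN * dN) =
            beta * beta * (dN * dN) - (1 - tau) * (1 - tau) * (dN * dN) by ring.
  have e6 : beta * beta * (dN * dN - A * A) = beta * beta * (dN * dN) - beta * beta * (A * A) by ring.
  rewrite e6 in q6.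
  lra.
have q9 : beta * dN1 <= rho * beta * dN.
  apply: sq_le_inv => //; apply: Rmult_le_pos => //; nra.
have g1 : dN1 <= rho * dN.
  apply: (Rmult_le_reg_l beta); first lra.
  have -> : beta * (rho * dN) = rho * beta * dN by ring. exact: q9.
split => //.
have q10 : A <= dN by apply: sq_le_inv => //; nra.
have q11 : s * (rho * dN - dN1) >= 0 by apply: Rle_ge; apply: Rmult_le_pos; [have := s_ge1; lra | lra].
have -> : s * (dN - dN1) = s * (1 - rho) * dN + s * (rho * dN - dN1) by ring.
rewrite hs; lra.
Qed.

Lemma Inv_of_Hyp N : HypN N -> Inv N.
Proof.
elim: N => [|N IH] hH; first by move=> k.
apply: step => //; apply: IH => i h1 h2; exact: hH i h1 (leqW h2).
Qed.

Section Full.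
Hypothesis hfull : forall i, (1 <= i)%N -> cond3 i /\ condF i.

Lemma Inv_all N : Inv N.
Proof. apply: Inv_of_Hyp => i h1 _; exact: hfull. Qed.
Arguments Inv_all : clear implicits.

Lemma dd_pow k : dd k <= rho ^ k * vdist x0 xs.
Proof.
elim: k => [|k IH].
  rewrite /= Rmult_1_l; exact: (bounds (Inv_all 0) (leqnn 0)).1.
have [_ h] := Inv_all k.+1 k (ltnSn k).
rewrite /=; have := dd_ge0 k.
have : rho * dd k <= rho * (rho ^ k * vdist x0 xs) by apply: Rmult_le_compat_l.
move=> h1 h2; rewrite Rmult_assoc; lra.
Qed.

Lemma small c : 0 <= c -> forall e, 0 < e -> exists N, forall k, (N <= k)%N -> c * rho ^ k < e.
Proof.
move=> hc e he.
have hy : 0 < e / (c + 1) by apply: Rdiv_lt_0_compat; lra.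
have [N hN] := pow_lt_1_zero rho ltac:(rewrite Rabs_right; lra) (e / (c + 1)) hy.
exists N => k hk; have := hN k ltac:(apply/leP; exact: hk).
rewrite Rabs_right; last by apply: Rle_ge; apply: pow_le.
move=> h.
have : c * rho ^ k <= c * (e / (c + 1)) by apply: Rmult_le_compat_l; lra.
have : c * (e / (c + 1)) < e.
  apply: (Rmult_lt_reg_r (c + 1)); first lra.
  have -> : c * (e / (c + 1)) * (c + 1) = c * e by field; lra.
  nra.
lra.
Qed.

Lemma close_seq j k : (j <= k)%N -> vdist (x k) (x j) <= s * dd j.
Proof.
move=> h; have [h1 h2] := tele' (Inv_all k) h (leqnn k).
have := dd_ge0 k; have := s_ge1; nra.
Qed.

Lemma conv : exists xbar, seq_cv x xbar.
Proof.
apply: cauchy_vec => e he.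
have hc : 0 <= s * vdist x0 xs by apply: Rmult_le_pos; [have := s_ge1; lra | exact: vdist_ge0].
have [N hN] := small hc he.
have hh : forall j k, (N <= j)%N -> (j <= k)%N -> vdist (x k) (x j) < e.
  move=> j k hj hjk; have h1 := close_seq hjk.
  have h2 : s * dd j <= s * (rho ^ j * vdist x0 xs)
    by apply: Rmult_le_compat_l; [have := s_ge1; lra | exact: dd_pow].
  have h3 := hN j hj.
  have e1 : s * (rho ^ j * vdist x0 xs) = s * vdist x0 xs * rho ^ j by ring.
  lra.
exists N => j k hj hk; case: (leqP j k) => h.
  rewrite vdist_sym; exact: hh.
exact: hh (ltnW h).
Qed.

Lemma main_conv : exists xbar, inter K m xbar /\ V1 xbar /\ seq_cv x xbar /\
  forall i, vdist (x i.+1) xbar <= vdist (x i) xbar /\ vdist (x i) xbar <= s * beta * maxd K m (x i).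
Proof.
have [xbar hx] := conv.
have hcli : forall i, vdist xbar (x i) <= s * dd i.
  move=> i; apply: (lim_le hx); exists i => k hk; exact: close_seq hk.
have he0 := vdist_ge0 x0 xs. have hs1 := s_ge1.
have hxb : vdist xbar xs <= (1 + s) * vdist x0 xs.
  have h1 := hcli 0%N. have [h2 _] := bounds (Inv_all 0) (leqnn 0).
  have h3 := vdist_triangle xbar (x 0%N) xs. rewrite hx0 in h1 h3.
  have h4 : s * dd 0 <= s * vdist x0 xs by apply: Rmult_le_compat_l; lra.
  have e1 : (1 + s) * vdist x0 xs = vdist x0 xs + s * vdist x0 xs by ring.
  lra.
have hint : inter K m xbar.
  move=> l hl; apply: (hcl hl) => e he.
  have hc : 0 <= (1 + s) * vdist x0 xs by apply: Rmult_le_pos; lra.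
  have [N hN] := small hc he.
  have [z hz] := proj_exists (x N) inter_closed inter_ne.
  exists z; split; first exact: hz.1 l hl.
  have h1 := vdist_triangle xbar (x N) z.
  have h2 : vdist (x N) z = dd N by rewrite /dd (dist_proj hz).
  have h3 := hcli N. have h4 := dd_pow N. have h5 := hN N (leqnn N).
  have h6 : (1 + s) * dd N <= (1 + s) * (rho ^ N * vdist x0 xs) by apply: Rmult_le_compat_l; lra.
  have e1 : (1 + s) * (rho ^ N * vdist x0 xs) = (1 + s) * vdist x0 xs * rho ^ N by ring.
  have h7 : s * dd N + dd N = (1 + s) * dd N by ring.
  lra.
exists xbar; split => //; split; first by apply: hV1; lra.
split => // i.
have hI := Inv_all i. have [c3i cFi] := hfull (ltn0Sn i).
have hHi : HypN i by move=> j h1 _; exact: hfull.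
have hF : shqp_F pbar (fun _ => tau) x xp i.+1 xbar.
  apply: MEM => //; first lra.
  move=> k hk.
  have h1 := hcli k. have h2 := dd_ge0 k.
  have h3 := metric (hfull (ltn0Sn k)).1 (xk_r1 hI hk).
  have h4 : (1 + s) * dd k <= (1 + s) * (beta * DD k) by apply: Rmult_le_compat_l; lra.
  rewrite Rmult_assoc; nra.
have cFi' := cFi; rewrite /condF sub1S in cFi'.
have hconv : convex (shqp_F pbar (fun _ => tau) x xp i.+1)
  by move=> a b t ha hb2 ht; exact: F_convex ha hb2 ht.
have hp := proj_pyth hconv cFi' hF.
have g1 : vdist (x i.+1) xbar <= vdist (x i) xbar.
  apply: sq_le_inv; first exact: vdist_ge0.
  have := vdist_ge0 (x i) (x i.+1). nra.
split => //.
rewrite vdist_sym (maxd_eq c3i).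
have h1 := hcli i. have h3 := metric c3i (xk_r1 hI (leqnn i)).
have : s * dd i <= s * (beta * DD i) by apply: Rmult_le_compat_l; lra.
rewrite Rmult_assoc; lra.
Qed.

End Full.

End Run.

Definition argm (y : vec n) : nat := epsilon (inhabits 0%N)
  (fun j => (j < m)%N /\ forall j', (j' < m)%N -> dist_set (K j') y <= dist_set (K j) y).
Definition projp (C : vec n -> Prop) (y : vec n) := epsilon (inhabits y) (proj_set C y).
Definition stepS (st : (nat -> vec n) * (nat -> vec n) * (nat -> nat)) (k : nat) :=
  let: (X, P, J) := st in
  let j := argm (X k) in
  let P' := upd P k.+1 (projp (K j) (X k)) in
  (upd X k.+1 (projp (shqp_F pbar (fun _ => tau) X P' k.+1) (X k)), P', upd J k.+1 j).
Fixpoint Sq k := match k with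
  | 0%N => (fun _ : nat => x0, fun _ : nat => x0, fun _ : nat => 0%N)
  | k'.+1 => stepS (Sq k') k' end.
Definition xf i := (Sq i).1.1 i.
Definition xpf i := (Sq i).1.2 i.
Definition jbf i := (Sq i).2 i.

Lemma Sq_stable i t : [/\ (Sq (i + t)).1.1 i = xf i, (Sq (i + t)).1.2 i = xpf i
  & (Sq (i + t)).2 i = jbf i].
Proof.
elim: t => [|t IH]; first by rewrite addn0.
rewrite addnS /=; case: (Sq (i + t)) IH => [[X P] J] /= [h1 h2 h3].
have hne : (i == (i + t).+1) = false by apply: ltn_eqF; rewrite ltnS leq_addr.
by rewrite /upd !hne.
Qed.

Lemma stable i k : (i <= k)%N -> [/\ (Sq k).1.1 i = xf i, (Sq k).1.2 i = xpf i
  & (Sq k).2 i = jbf i].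
Proof. move=> h; have := Sq_stable i (k - i); by rewrite subnKC. Qed.

Lemma K_ne l : (l < m)%N -> exists y, K l y.
Proof. by move=> hl; exists xs; apply: hxs. Qed.

Lemma xf0 : xf 0%N = x0.
Proof. by []. Qed.

Lemma jbf_eq k : jbf k.+1 = argm (xf k).
Proof. by rewrite /jbf /xf /=; case: (Sq k) => [[X P] J] /=; rewrite /upd eqxx. Qed.

Lemma xpf_eq k : xpf k.+1 = projp (K (jbf k.+1)) (xf k).
Proof. by rewrite jbf_eq /xpf /xf /=; case: (Sq k) => [[X P] J] /=; rewrite /upd eqxx. Qed.

Lemma xf_eq k : xf k.+1 = projp (shqp_F pbar (fun _ => tau) (Sq k).1.1
   (upd (Sq k).1.2 k.+1 (xpf k.+1)) k.+1) (xf k).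
Proof.
rewrite xpf_eq jbf_eq /xf /=; case: (Sq k) => [[X P] J] /=; by rewrite /upd eqxx.
Qed.

Lemma F_eq k : shqp_F pbar (fun _ => tau) (Sq k).1.1 (upd (Sq k).1.2 k.+1 (xpf k.+1)) k.+1 =
  shqp_F pbar (fun _ => tau) xf xpf k.+1.
Proof.
have eX : forall l, (l <= k.+1)%N -> (Sq k).1.1 (l - 1)%N = xf (l - 1)%N.
  move=> l hl; have [h _ _] := stable (i := (l - 1)%N) (k := k) ltac:(by rewrite leq_subLR add1n).
  exact: h.
have eP : forall l, (l <= k.+1)%N -> upd (Sq k).1.2 k.+1 (xpf k.+1) l = xpf l.
  move=> l hl; rewrite /upd; case: eqP => [->|hne] //.
  have hlk : (l <= k)%N by rewrite -ltnS ltn_neqAle hl andbT; apply/eqP.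
  by have [_ h _] := stable hlk.
apply: functional_extensionality => y; apply: propositional_extensionality.
split => h l h1 h2; have := h l h1 h2; rewrite /shqp_b /shqp_a (eX l h2) (eP l h2); done.
Qed.

Lemma cond3_all k : cond3 xf xpf jbf k.+1.
Proof.
rewrite /cond3 sub1S.
have [j hj] := argmax_exists (fun l => dist_set (K l) (xf k)) hm.
have ha := epsilon_spec (inhabits 0%N) (fun j => (j < m)%N /\ forall j', (j' < m)%N ->
   dist_set (K j') (xf k) <= dist_set (K j) (xf k)) (ex_intro _ j hj).
rewrite -/(argm (xf k)) -jbf_eq in ha.
case: ha => hj1 hj2; split => //.
rewrite xpf_eq; apply: (epsilon_spec (inhabits (xf k)) (proj_set (K (jbf k.+1)) (xf k))).
exact: proj_exists (hcl hj1) (K_ne hj1).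
Qed.

Lemma HypN_f N : HypN xf xpf jbf N.
Proof.
elim: N => [|N IH]; first by move=> i h1 h2; move: (leq_trans h1 h2).
move=> i h1 h2; case: (ltnP N i) => hi; last exact: IH.
have -> : i = N.+1 by apply: anti_leq; rewrite h2 hi.
have hc := cond3_all N.
split => //.
have hI := Inv_of_Hyp xf0 IH.
have [z [_ hz]] := znear xf0 IH hc hI.
rewrite /condF sub1S xf_eq F_eq.
apply: (epsilon_spec (inhabits (xf N)) (proj_set (shqp_F pbar (fun _ => tau) xf xpf N.+1) (xf N))).
apply: proj_exists; last exact: (ex_intro _ z hz).
move=> q hq; exact: F_closed hq.
Qed.

Lemma exists_run : exists x, shqp_run K m pbar (fun _ => tau) x0 x.
Proof.
exists xf; split => //; exists jbf, xpf => i hi.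
case: i hi => // k _.
have [hc hF] := HypN_f (N := k.+1) (ltn0Sn k) (leqnn _).
case: hc => h1 h2 h3; by split.
Qed.

Lemma conv_run x : shqp_run K m pbar (fun _ => tau) x0 x ->
  exists xbar, inter K m xbar /\ V1 xbar /\ seq_cv x xbar /\
  forall i, vdist (x i.+1) xbar <= vdist (x i) xbar /\ vdist (x i) xbar <= s * beta * maxd K m (x i).
Proof.
move=> [hx0 [jb [xp hall]]].
apply: (main_conv (xp := xp) (jb := jb) hx0) => i hi.
have [h1 h2 h3 h4] := hall i hi; by split.
Qed.

End Main.

Unset Implicit Arguments. Set Strict Implicit.


Lemma unif_rad (P : nat -> R -> Prop) (m : nat) :
  (forall l, (l < m)%N -> exists r, 0 < r /\ P l r) ->
  (forall l r r', 0 < r' <= r -> P l r -> P l r') ->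
  exists r, 0 < r /\ forall l, (l < m)%N -> P l r.
Proof.
move=> h hmono; elim: m h => [|m IH] h.
  by exists 1; split => //; lra.
have [r [hr hP]] := IH (fun l hl => h l (ltnW hl)).
have [r' [hr' hP']] := h m (ltnSn m).
exists (Rmin r r'); split; first by apply: Rmin_glb_lt.
move=> l; rewrite ltnS leq_eqVlt => /orP [/eqP ->|hl].
  apply: hmono hP'; split; [by apply: Rmin_glb_lt | exact: Rmin_r].
apply: hmono (hP l hl); split; [by apply: Rmin_glb_lt | exact: Rmin_l].
Qed.

Theorem lemma5p2 (n m : nat) (K : nat -> vec n -> Prop) (xs : vec n)
  (beta : R) (V1 : vec n -> Prop) :
  (1 <= m)%nat ->
  (forall l, (l < m)%nat -> vclosed_set (K l)) ->
  inter K m xs ->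
  (forall l, (l < m)%nat -> super_regular (K l) xs) ->
  1 <= beta ->
  vis_neighborhood V1 xs ->
  (forall x, V1 x -> dist_set (inter K m) x <= beta * maxd K m x) ->
  forall tau : R, 0 < tau < 1 ->
  let rho := sqrt (beta ^ 2 - (1 - tau) ^ 2) / beta in
  let L := beta / (1 - rho) in
  exists U, vis_neighborhood U xs /\
    forall (x0 : vec n) (pbar : nat), U x0 -> (1 <= pbar)%nat ->
      (exists x, shqp_run K m pbar (fun _ => tau) x0 x) /\
      (forall x, shqp_run K m pbar (fun _ => tau) x0 x ->
         exists xbar, inter K m xbar /\ V1 xbar /\ seq_cv x xbar /\
           forall i : nat, vdist (x i.+1) xbar <= vdist (x i) xbar /\
                           vdist (x i) xbar <= L * maxd K m (x i)).
Proof.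
move=> hm hcl hxs hsr hb [r1 [hr1 hball1]] hmet tau htau rho L.
have hq : 0 < beta ^ 2 - (1 - tau) ^ 2 by rewrite /= !Rmult_1_r; nra.
have hsq := sqrt_sqrt _ (Rlt_le _ _ hq).
have hsq0 := sqrt_pos (beta ^ 2 - (1 - tau) ^ 2).
have hsqb : sqrt (beta ^ 2 - (1 - tau) ^ 2) < beta.
  move: hsq hsq0; rewrite /= !Rmult_1_r => hsq hsq0; nra.
have hrho0 : 0 <= rho by rewrite /rho; apply: Rmult_le_pos => //; apply: Rlt_le; apply: Rinv_0_lt_compat; lra.
have hrho1 : rho < 1.
  rewrite /rho; apply: (Rmult_lt_reg_r beta); first lra.
  rewrite /Rdiv Rmult_assoc Rinv_l; lra.
have hrho2 : rho * rho * (beta * beta) = beta * beta - (1 - tau) * (1 - tau).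
  rewrite /rho.
  have -> : sqrt (beta ^ 2 - (1 - tau) ^ 2) / beta * (sqrt (beta ^ 2 - (1 - tau) ^ 2) / beta) * (beta * beta)
    = sqrt (beta ^ 2 - (1 - tau) ^ 2) * sqrt (beta ^ 2 - (1 - tau) ^ 2) by field; lra.
  rewrite hsq /=; ring.
clearbody rho.
set sv := / (1 - rho).
have hs : sv * (1 - rho) = 1 by rewrite /sv Rinv_l; lra.
have hsv : 1 <= sv by nra.
have hL : L = sv * beta by rewrite /L /sv; field; lra.
clearbody L sv.
set delta := tau / ((1 + sv) * beta + 1).
have hden : 0 < (1 + sv) * beta + 1 by nra.
have hdelta : 0 < delta by apply: Rdiv_lt_0_compat; lra.
have hdC : delta * ((1 + sv) * beta + 1) <= tau by rewrite /delta; right; field; lra.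
clearbody delta.
have [rd [hrd hSR]] := unif_rad
  (fun l r => forall z y v, K l z -> vdist z xs < r -> K l y -> vdist y xs < r ->
     lim_normal (K l) y v -> inner (vsub z y) v <= delta * vdist z y * vnorm v) m
  (fun l hl => ltac:(
     have [_ h] := hsr l hl;
     have [V [[r [hr hball]] hV]] := h delta hdelta;
     exists r; split => // z y v hz hzr hy hyr hn;
     exact: hV z y v hz (hball z hzr) hy (hball y hyr) hn))
  (fun l r r' hr hP z y v hz hzr hy hyr hn =>
     hP z y v hz (Rlt_le_trans _ _ _ hzr (proj2 hr)) hy (Rlt_le_trans _ _ _ hyr (proj2 hr)) hn).
set r0 := Rmin rd r1 / (2 + sv).
have hmin : 0 < Rmin rd r1 by apply: Rmin_glb_lt.
have hr0 : 0 < r0 by apply: Rdiv_lt_0_compat; lra.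
exists (fun y => vdist y xs < r0); split; first by exists r0.
move=> x0 pbar hx0 hp.
have he0 := vdist_ge0 x0 xs.
have hrdm := Rmin_l rd r1. have hr1m := Rmin_r rd r1.
have hk : (2 + sv) * vdist x0 xs < Rmin rd r1.
  have : (2 + sv) * vdist x0 xs < (2 + sv) * r0 by apply: Rmult_lt_compat_l; lra.
  have -> : (2 + sv) * r0 = Rmin rd r1 by rewrite /r0; field; lra.
  done.
have he0rd : (2 + sv) * vdist x0 xs < rd by lra.
have he0r1 : (1 + sv) * vdist x0 xs < r1 by nra.
split.
  exact: (exists_run pbar hm hcl hxs hb htau (r1 := r1) (rd := rd) (V1 := V1) hball1 hmet
            hrho0 hrho1 hrho2 hs (Rlt_le _ _ hdelta) hdC hSR he0rd he0r1).
move=> x hrun.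
have := conv_run hcl hxs hb htau (r1 := r1) (rd := rd) (V1 := V1) hball1 hmet
            hrho0 hrho1 hrho2 hs (Rlt_le _ _ hdelta) hdC hSR he0rd he0r1 hrun.
by rewrite hL.
Qed.
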